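(* Let $A=\{a_1,a_2,\ldots,a_k\}$ be a set of $k\ge1$ distinct positive integers, let $\tau$ be a permutation of $\{1,2,\ldots,k\}$, and let $A_{\tau(j)}=\{a_{\tau(1)},\ldots,a_{\tau(j)}\}$ for $j=1,\ldots,k$, with $A_{\tau(0)}=\emptyset$. Then the following are equivalent: (a) No $2$-element subset of $A$ is relatively prime (i.e. $\gcd(a,b)>1$ for all distinct $a,b\in A$). (b) \[ \sum_{d=1}^{\sup A} \mu(d)\, v(A,d)\,(v(A,d)-1) = 0. \] (c) \[ \sum_{j=1}^k \sum_{d\mid a_{\tau(j)}} \mu(d)\, v(A_{\tau(j-1)},d) = 0. \]
   Context: $\sup A$ is the largest element of $A$. $\mu$ is the Möbius function. For a finite set $X$ of positive integers and a positive integer $d$, $v(X,d)$ is the number of multiples of $d$ in $X$ (so $v(\emptyset,d)=0$). *)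

(* Defs.v *)
From mathcomp Require Import all_boot all_order all_algebra all_fingroup.
Set Implicit Arguments. Unset Strict Implicit. Unset Printing Implicit Defensive.
Import GRing.Theory Num.Theory.

(* Moebius function: mu(n) = (-1)^(number of prime factors) if n is
   squarefree and positive, 0 otherwise (mu 0 := 0, never used). *)
Definition mobius (n : nat) : int :=
  if (0 < n)%N && all (fun p => logn p n == 1%N) (primes n)
  then ((-1) ^+ size (primes n))%R else 0%R.

(* v(X,d): number of multiples of d in the finite set X (given as a
   duplicate-free list). *)
Definition v (X : seq nat) (d : nat) : nat := count (fun x => d %| x) X.

Definition setA (k : nat) (a : 'I_k -> nat) : seq nat := [seq a i | i : 'I_k <- enum 'I_k].

(* A_{tau(j)} = {a_{tau(1)}, ..., a_{tau(j)}} (0-indexed: tau i with i < j). *)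
Definition prefA (k : nat) (a : 'I_k -> nat) (tau : {perm 'I_k}) (j : nat) : seq nat :=
  [seq a (tau i) | i : 'I_k <- [seq i <- enum 'I_k | (nat_of_ord i < j)%N]].

Definition supA (k : nat) (a : 'I_k -> nat) : nat := \max_(i < k) a i.

(* Main.v *)
Require Import Defs.
From mathcomp Require Import all_boot all_order all_algebra all_fingroup.
Import GRing.Theory Num.Theory.

Lemma mob0 : mobius 0 = 0%R. Proof. by []. Qed.
Lemma mob1 : mobius 1 = 1%R. Proof. by []. Qed.

Lemma mob_pp p x : prime p -> p %| x -> mobius (p * x) = 0%R.
Proof.
move=> pp px; case: (posnP x) => [->|x0]; first by rewrite muln0.
have p0 := prime_gt0 pp.
rewrite /mobius muln_gt0 p0 x0 /=.
case: allP => // H; exfalso.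
have pin : p \in primes (p * x) by rewrite mem_primes pp muln_gt0 p0 x0 dvdn_mulr.
have := H p pin; rewrite lognM // logn_prime // eqxx.
have : 0 < logn p x by rewrite logn_gt0 mem_primes pp x0 px.
by case: (logn p x).
Qed.

Lemma mob_p p x : prime p -> ~~ (p %| x) -> 0 < x -> mobius (p * x) = (- mobius x)%R.
Proof.
move=> pp px x0; have p0 := prime_gt0 pp.
have Hperm : perm_eq (primes (p * x)) (p :: primes x).
  apply: uniq_perm; first exact: primes_uniq.
    by rewrite /= primes_uniq mem_primes (negPf px) !andbF.
  move=> q; rewrite primesM // primes_prime // in_cons.
  by rewrite !in_cons in_nil orbF.
rewrite /mobius muln_gt0 p0 x0 /= (perm_all _ Hperm) (perm_size Hperm) /=.
rewrite lognM // logn_prime // eqxx (logn_coprime (p:=p)) ?prime_coprime //=.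
rewrite (@eq_in_all _ _ (fun q => logn q x == 1)); last first.
  move=> q; rewrite mem_primes => /and3P[qp _ qx].
  rewrite lognM // logn_prime //.
  case: (eqVneq q p) => [qE|//]; by rewrite qE (negPf px) in qx.
by case: all; rewrite ?exprS ?mulN1r ?oppr0.
Qed.

From mathcomp Require Import zify.

Lemma sum_mulp (p N : nat) (P : pred nat) (F : nat -> int) : 0 < p ->
  (forall e, P (p * e) -> p * e <= N) ->
  (\sum_(0 <= d < N.+1 | (p %| d)%N && P d) F d =
   \sum_(0 <= e < N.+1 | P (p * e)%N) F (p * e)%N)%R.
Proof.
move=> p0 HN.
transitivity (\sum_(i <- map (muln p) (index_iota 0 N.+1) | P i) F i)%R; last by rewrite big_map.
rewrite -[LHS]big_filter -[RHS]big_filter; apply: perm_big.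
apply: uniq_perm.
- by rewrite filter_uniq // iota_uniq.
- rewrite filter_uniq // map_inj_uniq ?iota_uniq //.
  by move=> x y /eqP; rewrite eqn_pmul2l // => /eqP.
move=> x; rewrite !mem_filter mem_index_iota; apply/idP/idP.
- case/andP=> [/andP[/dvdnP[e ->] Pe] Hr].
  rewrite mulnC in Pe *; rewrite Pe andTb; apply: map_f.
  rewrite mem_index_iota /= ltnS; apply: leq_trans (HN e Pe); exact: leq_pmull.
- case/andP=> [Px /mapP[e He xE]]; subst x.
  by rewrite dvdn_mulr // Px /= ltnS HN.
Qed.

Lemma mob_sum N n : 0 < n -> n <= N ->
  (\sum_(0 <= d < N.+1 | (d %| n)%N) mobius d = (n == 1)%:Z)%R.
Proof.
move=> n0 nN; case: (ltngtP n 1) => [|n1|n1]; first by case: n n0 {nN}.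
- have pp := pdiv_prime n1; have pn := pdiv_dvd n.
  set p := pdiv n in pp pn *.
  have p0 := prime_gt0 pp.
  set m := n %/ p.
  have nE : n = p * m by rewrite /m mulnC divnK.
  have m0 : 0 < m by move: n0; rewrite nE muln_gt0 => /andP[].
  clearbody p m.
  have E1 : (\sum_(0 <= d < N.+1 | ((d %| n) && (p %| d))%N) mobius d =
             - \sum_(0 <= d < N.+1 | ((d %| m) && ~~ (p %| d))%N) mobius d)%R.
    rewrite (eq_bigl (fun d => (p %| d) && (d %| n))); last by move=> d; rewrite andbC.
    rewrite sum_mulp //; last by move=> e /(dvdn_leq n0) => H; apply: leq_trans H nN.
    rewrite (eq_bigl (fun e => e %| m)); last by move=> e; rewrite nE dvdn_pmul2l.
    rewrite (bigID (dvdn p) (fun e => e %| m)) /= big1 ?add0r; last first.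
      by move=> e /andP[_ pe]; rewrite mob_pp.
    rewrite -sumrN; apply: eq_bigr => e /andP[em pe].
    rewrite mob_p //; exact: dvdn_gt0 em.
  have E2 : (\sum_(0 <= d < N.+1 | ((d %| n) && ~~ (p %| d))%N) mobius d =
             \sum_(0 <= d < N.+1 | ((d %| m) && ~~ (p %| d))%N) mobius d)%R.
    apply: eq_bigl => d; rewrite nE; case pd: (p %| d); rewrite ?andbF ?andbT //.
    by rewrite Gauss_dvdr // coprime_sym prime_coprime // pd.
  rewrite (bigID (dvdn p)) /= E1 E2 addNr.
  by case: n n0 n1 {pn nN nE E1 E2} => [|[]].
- subst n; rewrite big_mkord (@big_pred1 _ _ _ _ (inord 1)).
    by rewrite inordK.
  move=> d; rewrite /= dvdn1 -(inj_eq (@ord_inj _)) inordK //.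
Qed.

Lemma Posz_sum (I : Type) (r : seq I) (P : pred I) (F : I -> nat) :
  Posz (\sum_(i <- r | P i) F i) = (\sum_(i <- r | P i) Posz (F i))%R.
Proof. by rewrite (big_morph Posz PoszD (erefl (Posz 0))). Qed.

Lemma count_mapf (T : Type) (f : T -> nat) (Q : pred T) (P : pred nat) (r : seq T) :
  count P [seq f i | i <- [seq i <- r | Q i]] = \sum_(i <- r | Q i) nat_of_bool (P (f i)).
Proof.
elim: r => [|x r IH] /=; first by rewrite big_nil.
by rewrite big_cons; case: (Q x) => /=; rewrite IH.
Qed.

Lemma vA k (a : 'I_k -> nat) d : v (setA a) d = \sum_(i < k) nat_of_bool (d %| a i).
Proof.
rewrite /v /setA -{1}(filter_predT (enum 'I_k)) count_mapf.
by rewrite big_enum_cond; apply: eq_bigl.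
Qed.

Lemma vP k (a : 'I_k -> nat) (tau : {perm 'I_k}) (j d : nat) :
  v (prefA a tau j) d = \sum_(i < k | i < j) nat_of_bool (d %| a (tau i)).
Proof.
rewrite /v /prefA (@count_mapf _ (fun i : 'I_k => a (tau i))).
by rewrite big_enum_cond; apply: eq_bigl.
Qed.

Lemma vv k (b : 'I_k -> bool) :
  (Posz (\sum_(i < k) nat_of_bool (b i)) * (Posz (\sum_(i < k) nat_of_bool (b i)) - 1) =
   \sum_(i < k) \sum_(j < k | j != i) Posz (b i) * Posz (b j))%R.
Proof.
rewrite Posz_sum mulrBr mulr1 big_distrl /= -sumrB; apply: eq_bigr => i _.
rewrite big_distrr /= (bigD1 i) //=.
have -> : (Posz (b i) * Posz (b i))%R = Posz (b i) by case: (b i).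
by rewrite addrAC subrr add0r.
Qed.

Lemma dsum0 k (P : 'I_k -> 'I_k -> bool) (F : 'I_k -> 'I_k -> bool) :
  (\sum_(i < k) \sum_(j < k | P i j) Posz (F i j) = 0)%R <->
  (forall i j, P i j -> ~~ F i j).
Proof.
split.
- move=> H i j Pij.
  have nn (n : nat) : (0 <= Posz n)%R by [].
  have H1 := psumr_eq0P (fun i _ => sumr_ge0 _ (fun j _ => nn _)) H (i := i) isT.
  have H2 := psumr_eq0P (fun j _ => nn _) H1 (i := j) Pij.
  by move: H2; case: (F i j).
- move=> H; apply: big1 => i _; apply: big1 => j Pij.
  by rewrite (negPf (H i j Pij)).
Qed.

Lemma mob_pair N x y : 0 < x -> x <= N ->
  (\sum_(0 <= d < N.+1 | ((d %| x) && (d %| y))%N) mobius d = Posz (gcdn x y == 1))%R.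
Proof.
move=> x0 xN; rewrite -(@mob_sum N).
- by apply: eq_bigl => d; rewrite dvdn_gcd.
- by rewrite gcdn_gt0 x0.
- exact: leq_trans (dvdn_leq x0 (dvdn_gcdl x y)) xN.
Qed.

Lemma div_perm n : 0 < n -> perm_eq (divisors n) [seq d <- index_iota 0 n.+1 | d %| n].
Proof.
move=> n_gt0.
rewrite uniq_perm ?divisors_uniq ?filter_uniq ?iota_uniq // => d.
rewrite -dvdn_divisors // mem_filter mem_iota ltnS /=.
by case: (boolP (d %| n)) => //= /(dvdn_leq n_gt0) ->.
Qed.

Lemma sum_from1 N (F : nat -> int) : F 0 = 0%R ->
  (\sum_(1 <= d < N.+1) F d = \sum_(0 <= d < N.+1) F d)%R.
Proof. by move=> F0; rewrite [RHS]big_ltn // F0 add0r. Qed.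

Theorem theorem5p7 (k : nat) (hk : (1 <= k)%N) (a : 'I_k -> nat)
    (a_inj : injective a) (a_pos : forall i, (0 < a i)%N) (tau : {perm 'I_k}) :
  let condA := forall i j : 'I_k, i != j -> (1 < gcdn (a i) (a j))%N in
  let condB := (\sum_(1 <= d < (supA a).+1)
                 mobius d * (v (setA a) d)%:Z * ((v (setA a) d)%:Z - 1) = 0)%R in
  let condC := (\sum_(j < k) \sum_(d <- divisors (a (tau j)))
                 mobius d * (v (prefA a tau j) d)%:Z = 0)%R in
  (condA <-> condB) /\ (condB <-> condC).
Proof.
move=> condA condB condC.
have z1 : Posz (nat_of_bool true) = 1%R by [].
have z0 : Posz (nat_of_bool false) = 0%R by [].
have hA : condA <-> (forall i j : 'I_k, i != j -> ~~ (gcdn (a i) (a j) == 1)).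
  split=> H i j /H.
  - by move=> h; apply/eqP => e; rewrite e in h.
  - have g0 : 0 < gcdn (a i) (a j) by rewrite gcdn_gt0 a_pos.
    by move=> h; rewrite ltn_neqAle eq_sym h g0.
have hB : condB <-> (forall i j : 'I_k, j != i -> ~~ (gcdn (a i) (a j) == 1)).
  rewrite /condB sum_from1; last by rewrite mob0 !mul0r.
  set S := supA a.
  have E : (\sum_(0 <= d < S.+1) mobius d * (v (setA a) d)%:Z * ((v (setA a) d)%:Z - 1)
       = \sum_(i < k) \sum_(j < k | j != i) Posz (gcdn (a i) (a j) == 1))%R.
    rewrite (eq_bigr (fun d => \sum_(i < k) \sum_(j < k | j != i)
              mobius d * Posz (d %| a i) * Posz (d %| a j)))%R; last first.
      move=> d _; rewrite vA -mulrA vv big_distrr; apply: eq_bigr => i _.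
      by rewrite big_distrr; apply: eq_bigr => j _; exact: mulrA.
    rewrite exchange_big; apply: eq_bigr => i _.
    rewrite exchange_big; apply: eq_bigr => j _.
    rewrite -(@mob_pair S) ?a_pos //; last by rewrite /S /supA (leq_bigmax i).
    rewrite [RHS]big_mkcond; apply: eq_bigr => d _.
    by case: (d %| a i); case: (d %| a j); rewrite /= ?z1 ?z0 ?mulr1 ?mulr0.
  by rewrite E dsum0.
have hC : condC <-> (forall j i : 'I_k, i < j -> ~~ (gcdn (a (tau j)) (a (tau i)) == 1)).
  rewrite /condC.
  have E : (\sum_(j < k) \sum_(d <- divisors (a (tau j))) mobius d * (v (prefA a tau j) d)%:Z
       = \sum_(j < k) \sum_(i < k | (i < j)%N) Posz (gcdn (a (tau j)) (a (tau i)) == 1))%R.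
    apply: eq_bigr => j _.
    rewrite (perm_big _ (@div_perm _ (a_pos (tau j)))) big_filter.
    rewrite (eq_bigr (fun d => \sum_(i < k | (i < j)%N) mobius d * Posz (d %| a (tau i))))%R; last first.
      by move=> d _; rewrite vP Posz_sum big_distrr.
    rewrite exchange_big; apply: eq_bigr => i _.
    rewrite -(@mob_pair (a (tau j))) ?a_pos //.
    rewrite [RHS]big_mkcond [LHS]big_mkcond; apply: eq_bigr => d _.
    by case: (d %| a (tau j)); case: (d %| a (tau i)); rewrite /= ?z1 ?z0 ?mulr1 ?mulr0.
  by rewrite E dsum0.
split.
- rewrite hA hB; split=> H i j ij; first by apply: H; rewrite eq_sym.
  by apply: H; rewrite eq_sym.
- rewrite hB hC; split=> H.
  + move=> j i ij; apply: H.
    by rewrite (inj_eq perm_inj); apply: contraTneq ij => ->; rewrite ltnn.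
  + move=> i j ji.
    case: (ltngtP (tau^-1 i)%g (tau^-1 j)%g) => [lt|lt|eq].
    * by have := H _ _ lt; rewrite !permKV gcdnC.
    * by have := H _ _ lt; rewrite !permKV.
    * by move/ord_inj/perm_inj: eq ji => ->; rewrite eqxx.
Qed.
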